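(* Assume the setting, majorant assumptions and constants of the context. Let $x_k$ be an iterate of the INL-CondG method with $x_k\in C\cap B(x_*,\sigma)\setminus\{x_*\}$ and $F(x_k)\neq0$, where the invertible matrix $M_k$ satisfies $\|M_k^{-1}F'(x_k)\|\le\omega_1$, $\|M_k^{-1}F'(x_k)-I\|\le\omega_2$, and for some invertible $P_k$ and scalar $\eta_k$ the residual satisfies $\|P_kr_k\|\le\eta_k\|P_kF(x_k)\|$ and $0\le\eta_k\,\mathrm{cond}(P_kF'(x_k))\le\vartheta$; let $\theta_k\ge0$ and $x_{k+1}=\mathrm{CondG}(y_k,x_k,\theta_k\|s_k\|^2)$. Then $$\|x_{k+1}-x_*\|\le\omega_1(1+\vartheta)(1+\sqrt{2\theta_k})|n_f(\|x_k-x_*\|)|+\big(\omega_1[(1+\vartheta)\sqrt{2\theta_k}+\vartheta]+\omega_2\big)\|x_k-x_*\|,$$ where $n_f(t)=t-f(t)/f'(t)$. If moreover $\theta_k\le\lambda^2/2$, then $\|x_{k+1}-x_*\|<\|x_k-x_*\|$.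
   Context: Setting: $\Omega\subset\mathbb{R}^n$ is open, $F:\Omega\to\mathbb{R}^n$ is continuously differentiable with Jacobian $F'(x)$, $C\subset\Omega$ is a nonempty convex compact set, and $x_*\in C$ satisfies $F(x_* )=0$ with $F'(x_* )$ nonsingular. $\|\cdot\|$ is the Euclidean norm on $\mathbb{R}^n$ and the induced operator norm on matrices; $B(a,\delta)$ is the open ball of center $a$ and radius $\delta$; $\mathrm{cond}(A)=\|A^{-1}\|\|A\|$. Majorant assumptions: $R>0$, $\kappa:=\sup\{t\in[0,R): B(x_*,t)\subset\Omega\}$, and $f:[0,R)\to\mathbb{R}$ is continuously differentiable with $$\|F'(x_* )^{-1}[F'(x)-F'(x_*+\tau(x-x_* ))]\|\le f'(\|x-x_*\|)-f'(\tau\|x-x_*\|)\quad\text{for all }\tau\in[0,1],\ x\in B(x_*,\kappa),$$ (h1) $f(0)=0$, $f'(0)=-1$; (h2) $f'$ is strictly increasing. Constants: $0\le\vartheta<1$, $0\le\omega_2<\omega_1$, $\omega_1\vartheta+\omega_2<1$, $\lambda\in[0,(1-\omega_2-\omega_1\vartheta)/(\omega_1(1+\vartheta)))$; $\nu:=\sup\{t\in[0,R): f'(t)<0\}$; $\rho:=\sup\{\delta\in(0,\nu): \omega_1(1+\vartheta)(1+\lambda)\big(\tfrac{f(t)}{tf'(t)}-1\big)+\omega_1[(1+\vartheta)\lambda+\vartheta]+\omega_2<1 \text{ for all } t\in(0,\delta)\}$; $\sigma:=\min\{\kappa,\rho\}$. CondG procedure $z=\mathrm{CondG}(y,x,\varepsilon)$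 (for $y\in\mathbb{R}^n$, $x\in C$, $\varepsilon\ge0$): set $z_1=x$, $t=1$. (P1) Compute an optimal solution $u_t$ of $g_t^*=\min_{u\in C}\langle z_t-y,u-z_t\rangle$. (P2) If $g_t^*\ge-\varepsilon$, set $z=z_t$ and stop; otherwise set $\alpha_t=\min\{1,-g_t^*/\|u_t-z_t\|^2\}$, $z_{t+1}=z_t+\alpha_t(u_t-z_t)$, $t\leftarrow t+1$ and go to (P1). INL-CondG method: given $x_0\in C$ and $\{\theta_j\}\subset[0,\infty)$, for $k=0,1,\dots$: if $F(x_k)=0$ stop; otherwise choose an invertible matrix $M_k$ (approximating $F'(x_k)$) and compute $(s_k,r_k,y_k)$ with $M_ks_k=-F(x_k)+r_k$, $y_k=x_k+s_k$; then set $x_{k+1}=\mathrm{CondG}(y_k,x_k,\theta_k\|s_k\|^2)$. *)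

(* Defs.v *)
From mathcomp Require Import ssreflect ssrfun ssrbool eqtype ssrnat seq fintype bigop.
From Stdlib Require Import Reals ClassicalEpsilon.
Set Implicit Arguments.
Unset Strict Implicit.
Local Open Scope R_scope.

Definition vec (n : nat) := 'I_n -> R.
Definition mat (n : nat) := 'I_n -> 'I_n -> R.

Definition vsum (n : nat) (g : 'I_n -> R) : R := \big[Rplus/0]_(i < n) g i.

Definition vzero (n : nat) : vec n := fun _ => 0.
Arguments vzero : clear implicits.
Definition vadd n (x y : vec n) : vec n := fun i => x i + y i.
Definition vsub n (x y : vec n) : vec n := fun i => x i - y i.
Definition vscale n (a : R) (x : vec n) : vec n := fun i => a * x i.

Definition inner n (x y : vec n) : R := vsum (fun i => x i * y i).
Definition vnorm n (x : vec n) : R := sqrt (inner x x).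

Definition ball n (a : vec n) (d : R) : vec n -> Prop := fun x => vnorm (vsub x a) < d.

Definition mv n (A : mat n) (x : vec n) : vec n := fun i => vsum (fun j => A i j * x j).
Definition mmul n (A B : mat n) : mat n := fun i k => vsum (fun j => A i j * B j k).
Definition mid (n : nat) : mat n := fun i j => if i == j then 1 else 0.
Arguments mid : clear implicits.
Definition msub n (A B : mat n) : mat n := fun i j => A i j - B i j.
Definition minvertible n (A : mat n) : Prop := exists B : mat n, mmul A B = mid n /\ mmul B A = mid n.
(* the inverse matrix (meaningful when A is invertible) *)
Definition minv n (A : mat n) : mat n :=
  epsilon (inhabits (fun _ _ => 0)) (fun B : mat n => mmul A B = mid n /\ mmul B A = mid n).
Definition opnorm n (A : mat n) : R :=
  epsilon (inhabits 0) (is_lub (fun r => exists x : vec n, vnorm x <= 1 /\ r = vnorm (mv A x))).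
Definition cond n (A : mat n) : R := opnorm (minv A) * opnorm A.

Definition is_open n (Om : vec n -> Prop) : Prop :=
  forall x, Om x -> exists d, 0 < d /\ forall y, ball x d y -> Om y.

Definition has_jacobian n (Om : vec n -> Prop) (F : vec n -> vec n) (DF : vec n -> mat n) : Prop :=
  forall x, Om x -> forall eps, 0 < eps -> exists d, 0 < d /\
    forall y, Om y -> vnorm (vsub y x) < d ->
      vnorm (vsub (vsub (F y) (F x)) (mv (DF x) (vsub y x))) <= eps * vnorm (vsub y x).

Definition jac_continuous n (Om : vec n -> Prop) (DF : vec n -> mat n) : Prop :=
  forall x, Om x -> forall eps, 0 < eps -> exists d, 0 < d /\
    forall y, Om y -> vnorm (vsub y x) < d -> opnorm (msub (DF y) (DF x)) < eps.

Definition C1_on n (Om : vec n -> Prop) (F : vec n -> vec n) (DF : vec n -> mat n) : Prop :=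
  is_open Om /\ has_jacobian Om F DF /\ jac_continuous Om DF.

Definition convex n (C : vec n -> Prop) : Prop :=
  forall a b, C a -> C b -> forall t, 0 <= t <= 1 ->
    C (vadd (vscale (1 - t) a) (vscale t b)).

Definition seq_compact n (C : vec n -> Prop) : Prop :=
  forall u : nat -> vec n, (forall k, C (u k)) ->
    exists (phi : nat -> nat) (l : vec n),
      (forall k, (phi k < phi (S k))%nat) /\ C l /\
      forall eps, 0 < eps -> exists N, forall k, (N <= k)%nat -> vnorm (vsub (u (phi k)) l) < eps.

(* one-variable calculus on a set D of reals (one-sided at endpoints) *)
Definition has_deriv_within (D : R -> Prop) (f : R -> R) (t l : R) : Prop :=
  forall eps, 0 < eps -> exists d, 0 < d /\
    forall s, D s -> s <> t -> Rabs (s - t) < d -> Rabs ((f s - f t) / (s - t) - l) < eps.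

Definition cont_within (D : R -> Prop) (g : R -> R) (t : R) : Prop :=
  forall eps, 0 < eps -> exists d, 0 < d /\
    forall s, D s -> Rabs (s - t) < d -> Rabs (g s - g t) < eps.

Definition cg_argmin n (C : vec n -> Prop) (y z u : vec n) : Prop :=
  C u /\ forall v, C v -> inner (vsub z y) (vsub u z) <= inner (vsub z y) (vsub v z).

(* condG_run C y eps z zout : starting from the current iterate z, the
   procedure (with any admissible choice of the optimal solutions u_t)
   terminates after finitely many steps with output zout. *)
Inductive condG_run n (C : vec n -> Prop) (y : vec n) (eps : R) : vec n -> vec n -> Prop :=
| cg_stop : forall z u, cg_argmin C y z u ->
    inner (vsub z y) (vsub u z) >= - eps -> condG_run C y eps z z
| cg_step : forall z u zout, cg_argmin C y z u ->
    inner (vsub z y) (vsub u z) < - eps ->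
    condG_run C y eps
      (vadd z (vscale (Rmin 1 (- inner (vsub z y) (vsub u z) / (vnorm (vsub u z)) ^ 2)) (vsub u z)))
      zout ->
    condG_run C y eps z zout.

Definition CondG n (C : vec n -> Prop) (y x : vec n) (eps : R) (z : vec n) : Prop :=
  condG_run C y eps x z.

Definition nf (f f' : R -> R) (t : R) : R := t - f t / f' t.

(* Main.v *)
Require Import Defs.
From mathcomp Require Import ssreflect ssrfun ssrbool eqtype ssrnat seq fintype bigop.
From Stdlib Require Import Reals ClassicalEpsilon.
From mathcomp Require Import ssralg matrix mxalgebra Rstruct.
From Stdlib Require Import Lra FunctionalExtensionality.
Set Implicit Arguments.
Unset Strict Implicit.
Local Open Scope R_scope.

Section InjInv.
Local Open Scope ring_scope.
Lemma inj_invertible n (A : mat n) :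
  (forall x, mv A x = vzero n -> x = vzero n) -> minvertible A.
Proof.
move=> Hinj.
pose MA : 'M[R]_n := \matrix_(i, j) A i j.
have Hu : MA \in unitmx.
  rewrite -row_full_unit -cokermx_eq0; apply/eqP/matrixP => i j.
  pose x : vec n := fun k => cokermx MA k j.
  have Hx : mv A x = vzero n.
    apply: functional_extensionality => k.
    have := congr1 (fun M : 'M[R]_n => M k j) (mulmx_coker MA).
    rewrite !mxE /= => H. rewrite /vzero; apply: (eq_trans _ H); rewrite /mv /vsum /x. apply: (@eq_bigr R 0%R Rplus) => l _. by rewrite /MA mxE.
  have := congr1 (fun v => v i) (Hinj x Hx). rewrite /x /vzero => ->. by rewrite mxE.
exists (fun i j => invmx MA i j); split; apply: functional_extensionality => i;
  apply: functional_extensionality => k.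
- have := congr1 (fun M : 'M[R]_n => M i k) (mulmxV Hu).
  rewrite !mxE => H; rewrite /mid; apply: (eq_trans (_ : _ = (i == k)%:R)); last by case: (i == k). rewrite -H /mmul /vsum. apply: (@eq_bigr R 0%R Rplus) => l _. by rewrite /MA mxE.
- have := congr1 (fun M : 'M[R]_n => M i k) (mulVmx Hu).
  rewrite !mxE => H; rewrite /mid; apply: (eq_trans (_ : _ = (i == k)%:R)); last by case: (i == k). rewrite -H /mmul /vsum. apply: (@eq_bigr R 0%R Rplus) => l _. by rewrite /MA mxE.
Qed.
End InjInv.
Lemma vsum_ext n (f g : 'I_n -> R) : (forall i, f i = g i) -> vsum f = vsum g.
Proof. by move=> H; rewrite (functional_extensionality _ _ H). Qed.

Lemma vsum_add n (f g : 'I_n -> R) : vsum (fun i => f i + g i) = vsum f + vsum g.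
Proof. by rewrite /vsum big_split. Qed.

Lemma vsum_scale n c (g : 'I_n -> R) : vsum (fun i => c * g i) = c * vsum g.
Proof. by rewrite /vsum big_distrr. Qed.

Lemma vsum_le n (f g : 'I_n -> R) : (forall i, f i <= g i) -> vsum f <= vsum g.
Proof.
move=> H; rewrite /vsum; apply: (big_ind2 (fun a b => a <= b)).
- lra.
- move=> *; lra.
- by move=> i _; apply: H.
Qed.

Lemma vsum_0 n : vsum (fun _ : 'I_n => 0) = 0.
Proof. by rewrite /vsum big1. Qed.

Lemma vsum_ge0 n (f : 'I_n -> R) : (forall i, 0 <= f i) -> 0 <= vsum f.
Proof. move=> H; rewrite -(vsum_0 n); exact: vsum_le. Qed.

Lemma vsum_swap n (a : 'I_n -> 'I_n -> R) :
  vsum (fun i => vsum (fun j => a i j)) = vsum (fun j => vsum (fun i => a i j)).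
Proof. by rewrite /vsum exchange_big. Qed.

Lemma vsum_delta n (x : 'I_n -> R) i :
  vsum (fun j => (if i == j then 1 else 0) * x j) = x i.
Proof.
rewrite /vsum (bigD1 i) //= eqxx big1; first lra.
move=> j Hj; rewrite eq_sym (negbTE Hj); lra.
Qed.

Lemma vsum_single n (f : 'I_n -> R) i : (forall j, 0 <= f j) -> f i <= vsum f.
Proof.
move=> H; rewrite /vsum (bigD1 i) //=.
rewrite -[X in X <= _]Rplus_0_r; apply: Rplus_le_compat_l.
apply: (big_ind (fun a => 0 <= a)) => //; [lra | move=> *; lra].
Qed.

Ltac vext := apply: functional_extensionality => ?; rewrite /vadd /vsub /vscale /vzero; ring.

Lemma inner_sym n (x y : vec n) : inner x y = inner y x.
Proof. apply: vsum_ext => i; ring. Qed.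

Lemma inner_ge0 n (x : vec n) : 0 <= inner x x.
Proof. apply: vsum_ge0 => i; nra. Qed.

Lemma inner_expand n (x y : vec n) a :
  inner (vsub x (vscale a y)) (vsub x (vscale a y)) =
  inner x x + (-2 * a) * inner x y + (a * a) * inner y y.
Proof.
rewrite /inner -!vsum_scale -!vsum_add; apply: vsum_ext => i.
rewrite /vsub /vscale; ring.
Qed.

Lemma inner_add n (x y : vec n) :
  inner (vadd x y) (vadd x y) = inner x x + 2 * inner x y + inner y y.
Proof.
rewrite /inner -!vsum_scale -!vsum_add; apply: vsum_ext => i.
rewrite /vadd; ring.
Qed.

Lemma CS2 n (x y : vec n) : inner x y * inner x y <= inner x x * inner y y.
Proof.
have Hq : forall a, 0 <= inner x x + (-2 * a) * inner x y + (a * a) * inner y y.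
  move=> a; rewrite -inner_expand; exact: inner_ge0.
have Hy := inner_ge0 y; have Hx := inner_ge0 x.
move: Hq Hy Hx; set p := inner x y; set q := inner y y; set r := inner x x => Hq Hy Hx.
case: (Rle_lt_or_eq_dec _ _ Hy) => Hyy.
- have H := Hq (p / q).
  have E : r + -2 * (p / q) * p + p / q * (p / q) * q = r - p * p / q.
    field; lra.
  rewrite E in H.
  have H2 : p * p / q <= r by lra.
  have := Rmult_le_compat_r q _ _ (Rlt_le _ _ Hyy) H2.
  have -> : p * p / q * q = p * p by field; lra.
  lra.
- rewrite -Hyy Rmult_0_r.
  case: (Req_dec p 0) => Hp; first by rewrite Hp; lra.
  have := Hq ((r + 1) / (2 * p)).
  rewrite -Hyy Rmult_0_r Rplus_0_r.
  have -> : -2 * ((r + 1) / (2 * p)) * p = - (r + 1) by field.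
  lra.
Qed.

Lemma sq_le a b : 0 <= b -> a * a <= b * b -> a <= b.
Proof. move=> Hb H; nra. Qed.

Lemma vnorm_ge0 n (x : vec n) : 0 <= vnorm x.
Proof. exact: sqrt_pos. Qed.

Lemma vnorm_sq n (x : vec n) : vnorm x * vnorm x = inner x x.
Proof. rewrite /vnorm sqrt_sqrt //; exact: inner_ge0. Qed.

Lemma CS n (x y : vec n) : Rabs (inner x y) <= vnorm x * vnorm y.
Proof.
apply: sq_le; first by apply: Rmult_le_pos; apply: vnorm_ge0.
have -> : Rabs (inner x y) * Rabs (inner x y) = inner x y * inner x y.
  rewrite -Rabs_mult Rabs_right //; nra.
have -> : vnorm x * vnorm y * (vnorm x * vnorm y) = (vnorm x * vnorm x) * (vnorm y * vnorm y) by ring.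
rewrite !vnorm_sq; exact: CS2.
Qed.

Lemma vnorm_add n (x y : vec n) : vnorm (vadd x y) <= vnorm x + vnorm y.
Proof.
apply: sq_le; first by have := vnorm_ge0 x; have := vnorm_ge0 y; lra.
rewrite vnorm_sq inner_add.
have H := CS x y; have := Rle_abs (inner x y).
have -> : (vnorm x + vnorm y) * (vnorm x + vnorm y) =
  vnorm x * vnorm x + 2 * (vnorm x * vnorm y) + vnorm y * vnorm y by ring.
rewrite !vnorm_sq; lra.
Qed.

Lemma vnorm_scale n a (x : vec n) : vnorm (vscale a x) = Rabs a * vnorm x.
Proof.
have E : inner (vscale a x) (vscale a x) = (a * a) * inner x x.
  rewrite /inner -vsum_scale; apply: vsum_ext => i; rewrite /vscale; ring.
rewrite /vnorm E sqrt_mult_alt; last nra.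
by rewrite -(sqrt_Rsqr_abs a).
Qed.

Lemma vnorm_zero n (x : vec n) : vnorm x = 0 -> x = vzero n.
Proof.
move=> H.
have Hi : inner x x = 0.
  have := vnorm_sq x; rewrite H; lra.
apply: functional_extensionality => i; rewrite /vzero.
have := @vsum_single n (fun j => x j * x j) i (fun j => ltac:(nra)).
rewrite -/(inner x x) Hi => Hle; nra.
Qed.

Lemma vnorm_vzero n : vnorm (vzero n) = 0.
Proof.
rewrite /vnorm /inner (vsum_ext (g := fun _ => 0)); last by move=> i; rewrite /vzero; ring.
by rewrite vsum_0 sqrt_0.
Qed.

Lemma vsub_opp n (x y : vec n) : vsub x y = vscale (-1) (vsub y x).
Proof. vext. Qed.

Lemma vnorm_opp n (x y : vec n) : vnorm (vsub x y) = vnorm (vsub y x).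
Proof. rewrite vsub_opp vnorm_scale Rabs_Ropp Rabs_R1; ring. Qed.

Lemma vnorm_sub n (x y : vec n) : vnorm (vsub x y) <= vnorm x + vnorm y.
Proof.
have -> : vsub x y = vadd x (vscale (-1) y) by vext.
apply: Rle_trans (vnorm_add _ _) _.
rewrite vnorm_scale Rabs_Ropp Rabs_R1; lra.
Qed.

Lemma vnorm_rev n (x y : vec n) : vnorm x - vnorm y <= vnorm (vsub x y).
Proof.
have -> : x = vadd (vsub x y) y by vext.
have := vnorm_add (vsub x y) y.
have -> : vsub (vadd (vsub x y) y) y = vsub x y by vext.
lra.
Qed.

Lemma mv_add n (A : mat n) x y : mv A (vadd x y) = vadd (mv A x) (mv A y).
Proof.
apply: functional_extensionality => i; rewrite /mv /vadd -vsum_add.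
apply: vsum_ext => j; ring.
Qed.

Lemma mv_scale n (A : mat n) a x : mv A (vscale a x) = vscale a (mv A x).
Proof.
apply: functional_extensionality => i; rewrite /mv /vscale -vsum_scale.
apply: vsum_ext => j; ring.
Qed.

Lemma mv_sub n (A : mat n) x y : mv A (vsub x y) = vsub (mv A x) (mv A y).
Proof.
have -> : vsub x y = vadd x (vscale (-1) y) by vext.
rewrite mv_add mv_scale; vext.
Qed.

Lemma mv_zero n (A : mat n) : mv A (vzero n) = vzero n.
Proof.
have -> : vzero n = vscale 0 (vzero n) by vext.
rewrite mv_scale; vext.
Qed.

Lemma mv_mmul n (A B : mat n) x : mv (mmul A B) x = mv A (mv B x).
Proof.
apply: functional_extensionality => i; rewrite /mv /mmul.
rewrite (vsum_ext (g := fun j => vsum (fun l => A i l * B l j * x j))); last first.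
  move=> j; rewrite Rmult_comm -vsum_scale; apply: vsum_ext => l; ring.
rewrite vsum_swap; apply: vsum_ext => l.
rewrite -vsum_scale; apply: vsum_ext => j; ring.
Qed.

Lemma mv_msub n (A B : mat n) x : mv (msub A B) x = vsub (mv A x) (mv B x).
Proof.
apply: functional_extensionality => i; rewrite /mv /msub /vsub.
have -> : forall a b : R, a - b = a + (-1) * b by move=> *; ring.
rewrite -vsum_scale -vsum_add; apply: vsum_ext => j; ring.
Qed.

Lemma mv_mid n x : mv (mid n) x = x.
Proof. apply: functional_extensionality => i; exact: vsum_delta. Qed.

Lemma minv_spec n (A : mat n) : minvertible A ->
  (forall x, mv A (mv (minv A) x) = x) /\ (forall x, mv (minv A) (mv A x) = x).
Proof.
move=> HA.
have [H1 H2] : mmul A (minv A) = mid n /\ mmul (minv A) A = mid n.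
  exact: (epsilon_spec (inhabits (fun _ _ => 0)) (fun B : mat n => mmul A B = mid n /\ mmul B A = mid n) HA).
by split=> x; rewrite -mv_mmul ?H1 ?H2 mv_mid.
Qed.

Lemma minvertible_inj n (A : mat n) : minvertible A -> forall x, mv A x = vzero n -> x = vzero n.
Proof.
move=> HA x Hx; have [_ H2] := minv_spec HA.
by rewrite -(H2 x) Hx mv_zero.
Qed.

Lemma mv_bound n (A : mat n) x :
  vnorm (mv A x) <= sqrt (vsum (fun i => inner (A i) (A i))) * vnorm x.
Proof.
rewrite /vnorm -sqrt_mult_alt; last by apply: vsum_ge0 => i; exact: inner_ge0.
apply: sqrt_le_1_alt.
rewrite Rmult_comm -vsum_scale; apply: vsum_le => i.
have := CS2 (A i) x.
have -> : inner (A i) x = mv A x i by [].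
nra.
Qed.

Lemma opnorm_spec n (A : mat n) :
  0 <= opnorm A /\ forall x, vnorm (mv A x) <= opnorm A * vnorm x.
Proof.
set E := fun r => exists x : vec n, vnorm x <= 1 /\ r = vnorm (mv A x).
have HE : exists m, is_lub E m.
  have Hb : bound E.
    exists (sqrt (vsum (fun i => inner (A i) (A i)))) => r [x [Hx ->]].
    apply: Rle_trans (mv_bound A x) _.
    have := sqrt_pos (vsum (fun i => inner (A i) (A i))).
    have := vnorm_ge0 x. nra.
  have Hne : exists r, E r.
    exists (vnorm (mv A (vzero n))); exists (vzero n); split => //.
    rewrite vnorm_vzero; lra.
  have [m Hm] := completeness E Hb Hne. by exists m.
have Hlub : is_lub E (opnorm A) by exact: (epsilon_spec (inhabits 0) _ HE).
have H0 : 0 <= opnorm A.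
  apply: (proj1 Hlub); exists (vzero n); rewrite mv_zero vnorm_vzero; split => //; lra.
split => // x.
case: (Req_dec (vnorm x) 0) => Hx.
  rewrite (vnorm_zero Hx) mv_zero vnorm_vzero; lra.
have Hpos : 0 < vnorm x by have := vnorm_ge0 x; lra.
have Hin : E (vnorm (mv A (vscale (/ vnorm x) x))).
  exists (vscale (/ vnorm x) x); split => //.
  rewrite vnorm_scale Rabs_right; last by apply: Rle_ge; apply: Rlt_le; apply: Rinv_0_lt_compat.
  rewrite Rinv_l; lra.
have := proj1 Hlub _ Hin.
rewrite mv_scale vnorm_scale Rabs_right; last by apply: Rle_ge; apply: Rlt_le; apply: Rinv_0_lt_compat.
move=> H.
have := Rmult_le_compat_r (vnorm x) _ _ (Rlt_le _ _ Hpos) H.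
have -> : / vnorm x * vnorm (mv A x) * vnorm x = vnorm (mv A x) by field; lra.
done.
Qed.

Lemma opnorm_ge0 n (A : mat n) : 0 <= opnorm A.
Proof. exact: (proj1 (opnorm_spec A)). Qed.
Lemma opnorm_le n (A : mat n) x : vnorm (mv A x) <= opnorm A * vnorm x.
Proof. exact: (proj2 (opnorm_spec A)). Qed.
Lemma hd_plus D f g lf lg t : has_deriv_within D f t lf -> has_deriv_within D g t lg ->
  has_deriv_within D (fun s => f s + g s) t (lf + lg).
Proof.
move=> Hf Hg eps He.
have [d1 [Hd1 H1]] := Hf (eps / 2) ltac:(lra).
have [d2 [Hd2 H2]] := Hg (eps / 2) ltac:(lra).
exists (Rmin d1 d2); split; first by apply: Rmin_pos.
move=> s Ds Hst Hs.
have Hs1 : Rabs (s - t) < d1 by apply: Rlt_le_trans Hs (Rmin_l _ _).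
have Hs2 : Rabs (s - t) < d2 by apply: Rlt_le_trans Hs (Rmin_r _ _).
have Hne : s - t <> 0 by lra.
have -> : (f s + g s - (f t + g t)) / (s - t) - (lf + lg) =
   ((f s - f t) / (s - t) - lf) + ((g s - g t) / (s - t) - lg) by field.
apply: Rle_lt_trans (Rabs_triang _ _) _.
have := H1 s Ds Hst Hs1; have := H2 s Ds Hst Hs2; lra.
Qed.

Lemma hd_scal D f l c t : has_deriv_within D f t l ->
  has_deriv_within D (fun s => c * f s) t (c * l).
Proof.
move=> Hf eps He.
have Hc := Rabs_pos c.
have [d [Hd H]] := Hf (eps / (Rabs c + 1)) ltac:(apply: Rdiv_lt_0_compat; lra).
exists d; split => // s Ds Hst Hs.
have Hne : s - t <> 0 by lra.
have -> : (c * f s - c * f t) / (s - t) - c * l = c * ((f s - f t) / (s - t) - l) by field.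
rewrite Rabs_mult.
have H1 := H s Ds Hst Hs.
have H2 : Rabs c * Rabs ((f s - f t) / (s - t) - l) <= Rabs c * (eps / (Rabs c + 1)).
  apply: Rmult_le_compat_l => //; lra.
apply: Rle_lt_trans H2 _.
have -> : Rabs c * (eps / (Rabs c + 1)) = eps * (Rabs c / (Rabs c + 1)) by field; lra.
have : Rabs c / (Rabs c + 1) < 1.
  have -> : Rabs c / (Rabs c + 1) = 1 - 1 / (Rabs c + 1) by field; lra.
  have : 0 < 1 / (Rabs c + 1) by apply: Rdiv_lt_0_compat; lra.
  lra.
move=> H3; nra.
Qed.

Lemma hd_lin D a t : has_deriv_within D (fun s => a * s) t a.
Proof.
move=> eps He; exists 1; split; [lra|] => s Ds Hst Hs.
have Hne : s - t <> 0 by lra.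
have -> : (a * s - a * t) / (s - t) - a = 0 by field.
rewrite Rabs_R0; lra.
Qed.

Lemma hd_const D c t : has_deriv_within D (fun _ => c) t 0.
Proof.
move=> eps He; exists 1; split; [lra|] => s Ds Hst Hs.
have -> : (c - c) / (s - t) - 0 = 0 by field; lra.
rewrite Rabs_R0; lra.
Qed.

Lemma hd_ext D f g l t : (forall s, f s = g s) -> has_deriv_within D f t l -> has_deriv_within D g t l.
Proof. by move=> H; rewrite (functional_extensionality _ _ H). Qed.

Lemma hd_comp_scale (f f' : R -> R) Rr t0 tau : 0 < t0 < Rr -> 0 <= tau <= 1 ->
  has_deriv_within (fun s => 0 <= s < Rr) f (tau * t0) (f' (tau * t0)) ->
  has_deriv_within (fun s => 0 <= s <= 1) (fun s => f (s * t0)) tau (t0 * f' (tau * t0)).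
Proof.
move=> Ht Htau Hf eps He.
have [d [Hd H]] := Hf (eps / t0) ltac:(apply: Rdiv_lt_0_compat; lra).
exists (d / t0); split; first by apply: Rdiv_lt_0_compat; lra.
move=> s Ds Hst Hs.
have Hne : s - tau <> 0 by lra.
have Du : 0 <= s * t0 < Rr by split; nra.
have Hu : s * t0 <> tau * t0 by move=> E; apply: Hst; apply: (Rmult_eq_reg_r t0) => //; lra.
have Hu2 : Rabs (s * t0 - tau * t0) < d.
  rewrite -Rmult_minus_distr_r Rabs_mult (Rabs_right t0); last lra.
  have := Rmult_lt_compat_r t0 _ _ (proj1 Ht) Hs.
  have -> : d / t0 * t0 = d by field; lra.
  done.
have H1 := H _ Du Hu Hu2.
have -> : (f (s * t0) - f (tau * t0)) / (s - tau) - t0 * f' (tau * t0) =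
  t0 * ((f (s * t0) - f (tau * t0)) / (s * t0 - tau * t0) - f' (tau * t0)).
  field; split; [lra|]. move=> E; apply: Hu; lra.
rewrite Rabs_mult (Rabs_right t0); last lra.
have := Rmult_lt_compat_l t0 _ _ (proj1 Ht) H1.
have -> : t0 * (eps / t0) = eps by field; lra.
done.
Qed.

Lemma hd_cont D f l t : has_deriv_within D f t l ->
  exists d, 0 < d /\ forall s, D s -> Rabs (s - t) < d -> Rabs (f s - f t) <= (Rabs l + 1) * Rabs (s - t).
Proof.
move=> Hf; have [d [Hd H]] := Hf 1 ltac:(lra).
exists d; split => // s Ds Hs.
case: (Req_dec s t) => Hst.
  rewrite Hst !Rminus_diag Rabs_R0; lra.
have Hne : s - t <> 0 by lra.
have H1 := H s Ds Hst Hs.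
have -> : f s - f t = ((f s - f t) / (s - t) - l + l) * (s - t) by field.
rewrite Rabs_mult; apply: Rmult_le_compat_r; first exact: Rabs_pos.
apply: Rle_trans (Rabs_triang _ _) _; lra.
Qed.

Lemma mono01 (g g' : R -> R) :
  (forall tau, 0 <= tau <= 1 -> has_deriv_within (fun s => 0 <= s <= 1) g tau (g' tau)) ->
  (forall tau, 0 <= tau <= 1 -> g' tau <= 0) -> g 1 <= g 0.
Proof.
move=> Hd Hn.
suff H : forall eps, 0 < eps -> g 1 <= g 0 + eps.
  case: (Rle_lt_dec (g 1) (g 0)) => // Hlt.
  have := H ((g 1 - g 0) / 2) ltac:(lra); lra.
move=> eps He.
pose E := fun tau => (0 <= tau <= 1) /\ g tau <= g 0 + eps * tau.
have HE0 : E 0 by split; [lra | rewrite Rmult_0_r; lra].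
have Hb : bound E by exists 1 => x [[_ ?] _].
have [c [Hub Hlub]] := completeness E Hb (ex_intro _ 0 HE0).
have Hc0 : 0 <= c by apply: Hub.
have Hc1 : c <= 1 by apply: Hlub => x [[_ ?] _].
have Hc01 : 0 <= c <= 1 by lra.
have HcE : g c <= g 0 + eps * c.
  case: (Rle_lt_dec (g c) (g 0 + eps * c)) => // Hgt.
  exfalso.
  set d0 := g c - g 0 - eps * c.
  have Hd0 : 0 < d0 by rewrite /d0; lra.
  have [d [Hdp Hcont]] := hd_cont (Hd c Hc01).
  set K := Rabs (g' c) + 1.
  have HK : 0 < K by rewrite /K; have := Rabs_pos (g' c); lra.
  set eta := Rmin d (d0 / (2 * K)).
  have Heta : 0 < eta by apply: Rmin_pos => //; apply: Rdiv_lt_0_compat; lra.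
  have [s [Es Hs]] : exists s, E s /\ c - eta < s.
    apply: NNPP => Hno.
    have : c <= c - eta.
      apply: Hlub => x Ex.
      case: (Rle_lt_dec x (c - eta)) => // Hx.
      exfalso; apply: Hno; by exists x.
    lra.
  have Hsc : s <= c by apply: Hub.
  move: (Es) => [Hs01 Hgs].
  have Hsd : Rabs (s - c) < d.
    rewrite Rabs_left1; last lra.
    have := Rmin_l d (d0 / (2 * K)); rewrite -/eta; lra.
  have := Hcont s Hs01 Hsd.
  have Hsd2 : Rabs (s - c) <= d0 / (2 * K).
    rewrite Rabs_left1; last lra.
    have := Rmin_r d (d0 / (2 * K)); rewrite -/eta; lra.
  move=> Hgc.
  have : K * Rabs (s - c) <= K * (d0 / (2 * K)) by apply: Rmult_le_compat_l; lra.
  have -> : K * (d0 / (2 * K)) = d0 / 2 by field; lra.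
  rewrite -/K in Hgc.
  move=> H3.
  have := Rle_abs (g c - g s).
  rewrite Rabs_minus_sym => H4.
  have : eps * s <= eps * c by apply: Rmult_le_compat_l; lra.
  rewrite /d0 in H3; lra.
case: (Rle_lt_dec 1 c) => Hc.
  have -> : 1 = c by lra.
  have : eps * c <= eps by nra.
  lra.
exfalso.
have [d [Hdp Hder]] := Hd c Hc01 eps He.
set s := c + Rmin d (1 - c) / 2.
have Hm : 0 < Rmin d (1 - c) by apply: Rmin_pos; lra.
have Hm1 := Rmin_l d (1 - c); have Hm2 := Rmin_r d (1 - c).
have Hs01 : 0 <= s <= 1 by rewrite /s; lra.
have Hsc : s <> c by rewrite /s; lra.
have Hsd : Rabs (s - c) < d by rewrite /s Rabs_right; lra.
have H1 := Hder s Hs01 Hsc Hsd.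
have H2 := Rle_abs ((g s - g c) / (s - c) - g' c).
have H3 := Hn c Hc01.
have Hq : (g s - g c) / (s - c) < eps by lra.
have Hpos : 0 < s - c by rewrite /s; lra.
have : g s - g c < eps * (s - c).
  have := Rmult_lt_compat_r (s - c) _ _ Hpos Hq.
  have -> : (g s - g c) / (s - c) * (s - c) = g s - g c by field; lra.
  lra.
move=> H4.
have : E s by split => //; lra.
move/Hub; lra.
Qed.

Lemma lub_gt (E : R -> Prop) m x : is_lub E m -> x < m -> exists y, E y /\ x < y.
Proof.
move=> [Hub Hlub] Hx; apply: NNPP => Hno.
have : m <= x.
  apply: Hlub => y Ey; case: (Rle_lt_dec y x) => // Hy.
  exfalso; apply: Hno; by exists y.
lra.
Qed.

Lemma vsub_eq0 n (a b : vec n) : vsub a b = vzero n -> a = b.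
Proof.
move=> H; apply: functional_extensionality => i.
have := congr1 (fun f => f i) H; rewrite /vsub /vzero; lra.
Qed.

Lemma inner_sub_r n (v a b : vec n) : inner v (vsub a b) = inner v a - inner v b.
Proof.
rewrite /inner.
have -> : forall p q : R, p - q = p + (-1) * q by move=> *; ring.
rewrite -vsum_scale -vsum_add; apply: vsum_ext => i; rewrite /vsub; ring.
Qed.

Lemma inner_scale_r n (v a : vec n) c : inner v (vscale c a) = c * inner v a.
Proof. rewrite /inner -vsum_scale; apply: vsum_ext => i; rewrite /vscale; ring. Qed.

Lemma inner_zero_r n (v : vec n) : inner v (vzero n) = 0.
Proof.
have -> : vzero n = vscale 0 (vzero n) by vext.
rewrite inner_scale_r; ring.
Qed.

Lemma condG_out n (C : vec n -> Prop) y eps z zout : condG_run C y eps z zout ->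
  exists u, cg_argmin C y zout u /\ inner (vsub zout y) (vsub u zout) >= - eps.
Proof.
elim => [z0 u Hu Hi | z0 u zo _ _ _ IH] //; by exists u.
Qed.

Lemma condG_bound n (C : vec n -> Prop) (y x : vec n) eps (z xs : vec n) th (s : vec n) :
  CondG C y x eps z -> C xs -> eps = th * (vnorm s) ^ 2 -> 0 <= th ->
  vnorm (vsub z xs) <= vnorm (vsub y xs) + sqrt (2 * th) * vnorm s.
Proof.
move=> HG Hxs Heps Hth.
have [u [[Hu Hmin] Hge]] := condG_out HG.
have H1 : inner (vsub z y) (vsub xs z) >= - eps.
  have := Hmin xs Hxs; lra.
have E1 : vadd (vsub y z) (vsub z xs) = vsub y xs by vext.
have E2 : inner (vsub y z) (vsub z xs) = inner (vsub z y) (vsub xs z).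
  apply: vsum_ext => i; rewrite /vsub; ring.
have H2 := inner_add (vsub y z) (vsub z xs).
rewrite E1 E2 in H2.
have H3 := inner_ge0 (vsub y z).
have Hs2 : sqrt (2 * th) * sqrt (2 * th) = 2 * th by apply: sqrt_sqrt; lra.
have Hs0 := sqrt_pos (2 * th).
have Hn0 := vnorm_ge0 s.
have Hy0 := vnorm_ge0 (vsub y xs).
apply: sq_le; first by nra.
rewrite vnorm_sq.
have -> : (vnorm (vsub y xs) + sqrt (2 * th) * vnorm s) *
          (vnorm (vsub y xs) + sqrt (2 * th) * vnorm s) =
   vnorm (vsub y xs) * vnorm (vsub y xs) + 2 * vnorm (vsub y xs) * (sqrt (2 * th) * vnorm s)
   + (sqrt (2 * th) * sqrt (2 * th)) * (vnorm s * vnorm s) by ring.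
rewrite vnorm_sq Hs2.
have : eps = th * (vnorm s * vnorm s) by rewrite Heps; ring.
move=> Heps'.
have : 0 <= 2 * vnorm (vsub y xs) * (sqrt (2 * th) * vnorm s) by apply: Rmult_le_pos; [apply: Rmult_le_pos; lra | apply: Rmult_le_pos; lra].
lra.
Qed.

Lemma hd_q n (Om : vec n -> Prop) (F : vec n -> vec n) (DF : vec n -> mat n)
  (HJ : has_jacobian Om F DF) (a e v : vec n) (A : mat n) tau0 :
  (forall s, 0 <= s <= 1 -> Om (vadd a (vscale s e))) -> 0 <= tau0 <= 1 ->
  has_deriv_within (fun s => 0 <= s <= 1)
    (fun s => inner v (mv A (F (vadd a (vscale s e))))) tau0
    (inner v (mv A (mv (DF (vadd a (vscale tau0 e))) e))).
Proof.
move=> HOm Ht eps He.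
set p := vadd a (vscale tau0 e).
set K := vnorm v * opnorm A * vnorm e + 1.
have Hv := vnorm_ge0 v; have HA := opnorm_ge0 A; have He0 := vnorm_ge0 e.
have HK : 0 < K by rewrite /K; have : 0 <= vnorm v * opnorm A * vnorm e; [apply: Rmult_le_pos => //; apply: Rmult_le_pos => // | lra].
have [d [Hd Hder]] := HJ p (HOm _ Ht) (eps / K) ltac:(apply: Rdiv_lt_0_compat; lra).
exists (d / (vnorm e + 1)); split; first by apply: Rdiv_lt_0_compat; lra.
move=> s Ds Hst Hs.
have Hne : s - tau0 <> 0 by lra.
set y := vadd a (vscale s e).
have Eyp : vsub y p = vscale (s - tau0) e by rewrite /y /p; vext.
have Hyp : vnorm (vsub y p) < d.
  rewrite Eyp vnorm_scale.
  have := Rmult_lt_compat_r (vnorm e + 1) _ _ ltac:(lra) Hs.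
  have -> : d / (vnorm e + 1) * (vnorm e + 1) = d by field; lra.
  have := Rabs_pos (s - tau0). nra.
have HR := Hder y (HOm _ Ds) Hyp.
set R0 := vsub (vsub (F y) (F p)) (mv (DF p) (vsub y p)).
have ER : inner v (mv A R0) = inner v (mv A (F y)) - inner v (mv A (F p))
     - (s - tau0) * inner v (mv A (mv (DF p) e)).
  rewrite /R0 Eyp mv_scale !mv_sub mv_scale !inner_sub_r inner_scale_r; ring.
have -> : (inner v (mv A (F y)) - inner v (mv A (F p))) / (s - tau0)
      - inner v (mv A (mv (DF p) e)) = inner v (mv A R0) / (s - tau0).
  rewrite ER; field; lra.
have Hs0 : 0 < Rabs (s - tau0) by apply: Rabs_pos_lt.
rewrite /Rdiv Rabs_mult Rabs_inv.
have H1 : Rabs (inner v (mv A R0)) <= vnorm v * (opnorm A * vnorm R0).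
  apply: Rle_trans (CS _ _) _; apply: Rmult_le_compat_l => //; exact: opnorm_le.
have H2 : vnorm R0 <= eps / K * (Rabs (s - tau0) * vnorm e).
  move: HR; rewrite /R0 Eyp vnorm_scale => HR; exact: HR.
have H3 : Rabs (inner v (mv A R0)) <= (eps / K) * (vnorm v * opnorm A * vnorm e) * Rabs (s - tau0).
  apply: Rle_trans H1 _.
  have : vnorm v * (opnorm A * vnorm R0) <= vnorm v * (opnorm A * (eps / K * (Rabs (s - tau0) * vnorm e))).
    apply: Rmult_le_compat_l => //; apply: Rmult_le_compat_l => //.
  move=> H4; apply: Rle_trans H4 _; right; ring.
have H6 : (eps / K) * (vnorm v * opnorm A * vnorm e) < eps.
  have : vnorm v * opnorm A * vnorm e < K by rewrite /K; lra.
  move=> H5.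
  have Hek : 0 < eps / K by apply: Rdiv_lt_0_compat.
  have := Rmult_lt_compat_l _ _ _ Hek H5.
  have -> : eps / K * K = eps by field; lra.
  done.
have Hi : 0 < / Rabs (s - tau0) by apply: Rinv_0_lt_compat.
have := Rmult_le_compat_r _ _ _ (Rlt_le _ _ Hi) H3.
have -> : eps / K * (vnorm v * opnorm A * vnorm e) * Rabs (s - tau0) * / Rabs (s - tau0)
   = eps / K * (vnorm v * opnorm A * vnorm e) by field; lra.
lra.
Qed.

Theorem lemma3
  (n : nat) (Om : vec n -> Prop) (F : vec n -> vec n) (DF : vec n -> mat n)
  (C : vec n -> Prop) (xs : vec n)
  (HF : C1_on Om F DF)
  (HCne : exists c, C c) (HCconv : convex C) (HCcomp : seq_compact C)
  (HCOm : forall x, C x -> Om x)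
  (HxsC : C xs) (HFxs : F xs = vzero n) (HDFxs : minvertible (DF xs))
  (Rr : R) (HR : 0 < Rr) (f f' : R -> R) (kappa : R)
  (Hkappa : is_lub (fun t => 0 <= t < Rr /\ forall y, ball xs t y -> Om y) kappa)
  (Hf : forall t, 0 <= t < Rr ->
          has_deriv_within (fun s => 0 <= s < Rr) f t (f' t) /\
          cont_within (fun s => 0 <= s < Rr) f' t)
  (Hmaj : forall tau x, 0 <= tau <= 1 -> ball xs kappa x ->
     opnorm (mmul (minv (DF xs))
               (msub (DF x) (DF (vadd xs (vscale tau (vsub x xs))))))
     <= f' (vnorm (vsub x xs)) - f' (tau * vnorm (vsub x xs)))
  (Hh1 : f 0 = 0 /\ f' 0 = -1)
  (Hh2 : forall s t, 0 <= s < Rr -> 0 <= t < Rr -> s < t -> f' s < f' t)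
  (vt w1 w2 lam : R)
  (Hvt : 0 <= vt < 1) (Hw : 0 <= w2 < w1) (Hw12 : w1 * vt + w2 < 1)
  (Hlam : 0 <= lam < (1 - w2 - w1 * vt) / (w1 * (1 + vt)))
  (nu rho sigma : R)
  (Hnu : is_lub (fun t => 0 <= t < Rr /\ f' t < 0) nu)
  (Hrho : is_lub (fun d => 0 < d < nu /\
            forall t, 0 < t < d ->
              w1 * (1 + vt) * (1 + lam) * (f t / (t * f' t) - 1)
              + w1 * ((1 + vt) * lam + vt) + w2 < 1) rho)
  (Hsigma : sigma = Rmin kappa rho)
  (xk : vec n) (HxkC : C xk) (Hxkb : ball xs sigma xk) (Hxkne : xk <> xs)
  (HFxk : F xk <> vzero n)
  (Mk : mat n) (HMk : minvertible Mk)
  (HMk1 : opnorm (mmul (minv Mk) (DF xk)) <= w1)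
  (HMk2 : opnorm (msub (mmul (minv Mk) (DF xk)) (mid n)) <= w2)
  (sk rk yk : vec n)
  (Hsk : mv Mk sk = vadd (vscale (-1) (F xk)) rk)
  (Hyk : yk = vadd xk sk)
  (Pk : mat n) (HPk : minvertible Pk) (etak : R)
  (Hres : vnorm (mv Pk rk) <= etak * vnorm (mv Pk (F xk)))
  (Heta : 0 <= etak * cond (mmul Pk (DF xk)) <= vt)
  (thetak : R) (Htheta : 0 <= thetak)
  (xk1 : vec n) (Hxk1 : CondG C yk xk (thetak * (vnorm sk) ^ 2) xk1) :
  vnorm (vsub xk1 xs) <=
    w1 * (1 + vt) * (1 + sqrt (2 * thetak)) * Rabs (nf f f' (vnorm (vsub xk xs)))
    + (w1 * ((1 + vt) * sqrt (2 * thetak) + vt) + w2) * vnorm (vsub xk xs)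
  /\ (thetak <= lam ^ 2 / 2 -> vnorm (vsub xk1 xs) < vnorm (vsub xk xs)).
Proof.
have Ht0 : 0 < vnorm (vsub xk xs).
  have := vnorm_ge0 (vsub xk xs). case/Rle_lt_or_eq_dec => // H0.
  exfalso; apply: Hxkne; apply: vsub_eq0; exact: vnorm_zero (esym H0).
have Htsig : vnorm (vsub xk xs) < sigma by exact: Hxkb.
have Htk : vnorm (vsub xk xs) < kappa by have := Rmin_l kappa rho; rewrite -Hsigma; lra.
have Htr : vnorm (vsub xk xs) < rho by have := Rmin_r kappa rho; rewrite -Hsigma; lra.
have HkR : kappa <= Rr by apply: (proj2 Hkappa) => x [[_ Hx] _]; lra.
have HrN : rho <= nu by apply: (proj2 Hrho) => x [[_ Hx] _]; lra.
have HtR : vnorm (vsub xk xs) < Rr by lra.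
have Hf't : f' (vnorm (vsub xk xs)) < 0.
  have [s [[[Hs0 HsR] Hfs] Hts]] := lub_gt Hnu (ltac:(lra) : vnorm (vsub xk xs) < nu).
  have := Hh2 _ _ (conj (Rlt_le _ _ Ht0) HtR) (conj Hs0 HsR) Hts; lra.
have [d [[Hd Hdcond] Htd]] := lub_gt Hrho Htr.
have Hrc := Hdcond _ (conj Ht0 Htd).
have Hw1 : 0 <= w1 by lra.
have Hf'mono : forall u, 0 <= u <= vnorm (vsub xk xs) -> f' u <= f' (vnorm (vsub xk xs)).
  move=> u [Hu0 Hu1]; case: (Rle_lt_or_eq_dec _ _ Hu1) => Hu.
  - by apply: Rlt_le; apply: Hh2 => //; lra.
  - by rewrite Hu; lra.
have HPtOm : forall tau, 0 <= tau <= 1 -> Om (vadd xs (vscale tau (vsub xk xs))).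
  move=> tau Htau; apply: HCOm.
  have := HCconv xs xk HxsC HxkC tau Htau.
  have -> : vadd (vscale (1 - tau) xs) (vscale tau xk) = vadd xs (vscale tau (vsub xk xs)) by vext.
  done.
have [HA0a HA0b] := minv_spec HDFxs.
have Hm0 := Hmaj 0 xk (ltac:(lra)) Htk.
have E0 : vadd xs (vscale 0 (vsub xk xs)) = xs by vext.
rewrite E0 Rmult_0_l (proj2 Hh1) in Hm0.
set t := vnorm (vsub xk xs) in Ht0 Htsig Htk Htr HtR Hf't Htd Hrc Hf'mono Hm0 *.
set A0 := minv (DF xs) in HA0a HA0b Hm0 Hmaj *.
set J := DF xk in Hm0 HMk1 HMk2 Heta *.
have Hlow : forall w, - f' t * vnorm w <= vnorm (mv A0 (mv J w)).
  move=> w.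
  have E : mv (mmul A0 (msub J (DF xs))) w = vsub (mv A0 (mv J w)) w.
    by rewrite mv_mmul mv_msub mv_sub HA0b.
  have H1 := opnorm_le (mmul A0 (msub J (DF xs))) w.
  rewrite E in H1.
  have H2 := vnorm_rev w (mv A0 (mv J w)).
  rewrite vnorm_opp in H2.
  have H3 : opnorm (mmul A0 (msub J (DF xs))) * vnorm w <= (f' t + 1) * vnorm w.
    apply: Rmult_le_compat_r; [exact: vnorm_ge0 | lra].
  lra.
have HJinv : minvertible J.
  apply: inj_invertible => x Hx.
  apply: vnorm_zero.
  have := Hlow x; rewrite Hx mv_zero vnorm_vzero => H.
  have := vnorm_ge0 x. nra.
have [HJa HJb] := minv_spec HJinv.
set w := mv (minv J) (F xk).
have HwJ : mv J w = F xk by apply: HJa.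
have Hphi : 0 <= t * f' t - f t.
  pose g := fun tau => (-1) * ((t * f' t) * tau + (-1) * f (tau * t)).
  have H : g 1 <= g 0.
    apply: (@mono01 g (fun tau => (-1) * (t * f' t + (-1) * (t * f' (tau * t))))).
    - move=> tau Htau.
      apply: hd_scal; apply: hd_plus; first exact: hd_lin.
      apply: hd_scal; apply: (hd_comp_scale (Rr := Rr)) . split; [exact: Ht0 | exact: HtR]. done.
      apply: (proj1 (Hf _ _)); split; nra.
    - move=> tau Htau.
      have := Hf'mono (tau * t) ltac:(split; nra). nra.
  move: H; rewrite /g !Rmult_0_r Rmult_1_r Rmult_0_l Rmult_1_l (proj1 Hh1); lra.
set v := mv A0 (vsub (F xk) (mv J (vsub xk xs))).
have Hv : vnorm v <= t * f' t - f t.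
  pose c := inner v (mv A0 (mv J (vsub xk xs))).
  pose G := fun tau => (inner v (mv A0 (F (vadd xs (vscale tau (vsub xk xs))))) + (- c) * tau)
       + (- vnorm v) * ((t * f' t) * tau + (-1) * f (tau * t)).
  have H : G 1 <= G 0.
    apply: (@mono01 G (fun tau => (inner v (mv A0 (mv (DF (vadd xs (vscale tau (vsub xk xs)))) (vsub xk xs))) + - c)
       + (- vnorm v) * (t * f' t + (-1) * (t * f' (tau * t))))).
    - move=> tau Htau.
      apply: hd_plus; first apply: hd_plus.
      + exact: (hd_q (proj1 (proj2 HF))).
      + exact: hd_lin.
      + apply: hd_scal; apply: hd_plus; first exact: hd_lin.
        apply: hd_scal; apply: (hd_comp_scale (Rr := Rr)) . split; [exact: Ht0 | exact: HtR]. done.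
        apply: (proj1 (Hf _ _)); split; nra.
    - move=> tau Htau.
      have Hm := Hmaj tau xk Htau Htk.
      rewrite -/t -/J in Hm.
      set P := vadd xs (vscale tau (vsub xk xs)) in Hm *.
      set M := mmul A0 (msub J (DF P)) in Hm.
      have EM : inner v (mv A0 (mv (DF P) (vsub xk xs))) + - c = - inner v (mv M (vsub xk xs)).
        by rewrite /M /c mv_mmul mv_msub (mv_sub A0) inner_sub_r; ring.
      rewrite EM.
      have H1 := Rle_abs (- inner v (mv M (vsub xk xs))).
      rewrite Rabs_Ropp in H1.
      have H2 := CS v (mv M (vsub xk xs)).
      have H3 := opnorm_le M (vsub xk xs).
      rewrite -/t in H3.
      have Hv0 := vnorm_ge0 v.
      have H4 : vnorm (mv M (vsub xk xs)) <= (f' t - f' (tau * t)) * t.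
        apply: Rle_trans H3 _; apply: Rmult_le_compat_r; lra.
      have H5 : vnorm v * vnorm (mv M (vsub xk xs)) <= vnorm v * ((f' t - f' (tau * t)) * t).
        by apply: Rmult_le_compat_l.
      lra.
  move: H; rewrite /G.
  have E1 : vadd xs (vscale 1 (vsub xk xs)) = xk by vext.
  rewrite E1 E0 HFxs mv_zero inner_zero_r !Rmult_0_r Rmult_1_r Rmult_0_l Rmult_1_l (proj1 Hh1).
  have E2 : inner v (mv A0 (F xk)) + - c = inner v v.
    by rewrite /c /v mv_sub inner_sub_r; ring.
  rewrite E2 -vnorm_sq => H.
  have := vnorm_ge0 v. nra.
set a := t * f' t - f t in Hphi Hv.
have Hft0 : f' t <> 0 by lra.
set N := a / (- f' t).
have HN0 : 0 <= N by apply: Rmult_le_pos => //; apply: Rlt_le; apply: Rinv_0_lt_compat; lra.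
have HN : Rabs (nf f f' t) = N.
  have -> : nf f f' t = - N by rewrite /nf /N /a; field.
  by rewrite Rabs_Ropp Rabs_right //; lra.
have Hwe : vnorm (vsub w (vsub xk xs)) <= N.
  have E : mv A0 (mv J (vsub w (vsub xk xs))) = v by rewrite /v (mv_sub J) HwJ.
  have := Hlow (vsub w (vsub xk xs)); rewrite E => H.
  apply: (Rmult_le_reg_l (- f' t)); first lra.
  have -> : - f' t * N = a by rewrite /N; field.
  lra.
have Hwn : vnorm w <= N + t.
  have -> : w = vadd (vsub w (vsub xk xs)) (vsub xk xs) by vext.
  apply: Rle_trans (vnorm_add _ _) _; rewrite -/t; lra.
have [HMa HMb] := minv_spec HMk.
set Mi := minv Mk in HMa HMb HMk1 HMk2 *.
have Hs : sk = mv Mi (vadd (vscale (-1) (F xk)) rk) by rewrite -Hsk HMb.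
set B := mmul Pk J in Heta *.
have HBinv : minvertible B.
  apply: inj_invertible => x Hx.
  apply: (minvertible_inj HJinv); apply: (minvertible_inj HPk).
  by rewrite -mv_mmul.
have [HBa HBb] := minv_spec HBinv.
have Hr : rk = mv J (mv (minv B) (mv Pk rk)).
  symmetry; apply: vsub_eq0; apply: (minvertible_inj HPk).
  rewrite (mv_sub Pk) -(mv_mmul Pk J) -/B HBa.
  apply: functional_extensionality => i; rewrite /vsub /vzero; ring.
have HMr : vnorm (mv Mi rk) <= w1 * vt * vnorm w.
  have E1 : mv Mi rk = mv (mmul Mi J) (mv (minv B) (mv Pk rk)) by rewrite mv_mmul -Hr.
  have H1 := opnorm_le (mmul Mi J) (mv (minv B) (mv Pk rk)).
  rewrite -E1 in H1.
  have H2 := opnorm_le (minv B) (mv Pk rk).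
  have E3 : mv Pk (F xk) = mv B w by rewrite /B mv_mmul HwJ.
  have H3 := opnorm_le B w. rewrite -E3 in H3.
  have Hc : cond B = opnorm (minv B) * opnorm B by [].
  rewrite Hc in Heta.
  have Hnb := opnorm_ge0 (minv B); have HnB := opnorm_ge0 B.
  have Hpr := vnorm_ge0 (mv Pk rk); have Hpf := vnorm_ge0 (mv Pk (F xk)).
  have Hnw := vnorm_ge0 w.
  have H4 : vnorm (mv Mi rk) <= w1 * (opnorm (minv B) * vnorm (mv Pk rk)).
    apply: Rle_trans H1 _; apply: Rle_trans (Rmult_le_compat_r _ _ _ (vnorm_ge0 _) HMk1) _.
    by apply: Rmult_le_compat_l.
  apply: Rle_trans H4 _.
  rewrite Rmult_assoc; apply: Rmult_le_compat_l => //.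
  case: (Rle_lt_dec 0 etak) => Heta0.
  - have H5 : vnorm (mv Pk rk) <= etak * (opnorm B * vnorm w).
      apply: Rle_trans Hres _; by apply: Rmult_le_compat_l.
    have H6 : opnorm (minv B) * vnorm (mv Pk rk) <= opnorm (minv B) * (etak * (opnorm B * vnorm w)).
      by apply: Rmult_le_compat_l.
    apply: Rle_trans H6 _.
    have -> : opnorm (minv B) * (etak * (opnorm B * vnorm w)) = (etak * (opnorm (minv B) * opnorm B)) * vnorm w by ring.
    apply: Rmult_le_compat_r => //; lra.
  - have H5 : vnorm (mv Pk rk) <= 0.
      apply: Rle_trans Hres _; nra.
    have : opnorm (minv B) * vnorm (mv Pk rk) <= 0 by nra.
    have : 0 <= vt * vnorm w by apply: Rmult_le_pos; lra.
    lra.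
have HMiJ : forall x, vnorm (mv (mmul Mi J) x) <= w1 * vnorm x.
  move=> x; apply: Rle_trans (opnorm_le _ _) _.
  apply: Rmult_le_compat_r => //; exact: vnorm_ge0.
have Hsk2 : sk = vadd (vscale (-1) (mv (mmul Mi J) w)) (mv Mi rk).
  by rewrite Hs mv_add mv_scale mv_mmul HwJ.
have Hskn : vnorm sk <= w1 * (1 + vt) * (N + t).
  rewrite Hsk2; apply: Rle_trans (vnorm_add _ _) _.
  rewrite vnorm_scale Rabs_Ropp Rabs_R1 Rmult_1_l.
  have := HMiJ w.
  have : w1 * vnorm w <= w1 * (N + t) by apply: Rmult_le_compat_l.
  have : w1 * vt * vnorm w <= w1 * vt * (N + t) by apply: Rmult_le_compat_l; nra.
  lra.
have Hyid : vsub yk xs = vadd (vsub (vsub xk xs) (mv (mmul Mi J) (vsub xk xs)))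
   (vadd (vscale (-1) (mv (mmul Mi J) (vsub w (vsub xk xs)))) (mv Mi rk)).
  rewrite Hyk Hsk2 !mv_mmul !mv_sub; vext.
have Hy : vnorm (vsub yk xs) <= w2 * t + w1 * N + w1 * vt * (N + t).
  rewrite Hyid; apply: Rle_trans (vnorm_add _ _) _.
  have T1 : vnorm (vsub (vsub xk xs) (mv (mmul Mi J) (vsub xk xs))) <= w2 * t.
    rewrite vnorm_opp.
    have <- : mv (msub (mmul Mi J) (mid n)) (vsub xk xs) = vsub (mv (mmul Mi J) (vsub xk xs)) (vsub xk xs).
      by rewrite mv_msub mv_mid.
    apply: Rle_trans (opnorm_le _ _) _.
    apply: Rmult_le_compat_r; [exact: vnorm_ge0 | exact: HMk2].
  have T2 : vnorm (vadd (vscale (-1) (mv (mmul Mi J) (vsub w (vsub xk xs)))) (mv Mi rk))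
      <= w1 * N + w1 * vt * vnorm w.
    apply: Rle_trans (vnorm_add _ _) _.
    rewrite vnorm_scale Rabs_Ropp Rabs_R1 Rmult_1_l.
    have := HMiJ (vsub w (vsub xk xs)).
    have : w1 * vnorm (vsub w (vsub xk xs)) <= w1 * N by apply: Rmult_le_compat_l.
    lra.
  have : w1 * vt * vnorm w <= w1 * vt * (N + t) by apply: Rmult_le_compat_l; nra.
  lra.
have Hx1 := condG_bound Hxk1 HxsC (erefl _) Htheta.
set S := sqrt (2 * thetak) in Hx1 *.
have HS0 : 0 <= S by apply: sqrt_pos.
have HSs : S * vnorm sk <= S * (w1 * (1 + vt) * (N + t)) by apply: Rmult_le_compat_l.
have Main : vnorm (vsub xk1 xs) <=
    w1 * (1 + vt) * (1 + S) * N + (w1 * ((1 + vt) * S + vt) + w2) * t.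
  have -> : w1 * (1 + vt) * (1 + S) * N + (w1 * ((1 + vt) * S + vt) + w2) * t
     = (w2 * t + w1 * N + w1 * vt * (N + t)) + S * (w1 * (1 + vt) * (N + t)) by ring.
  lra.
split; first by rewrite HN.
move=> Hth.
have HSl : S <= lam.
  rewrite /S -(sqrt_square lam); last lra.
  apply: sqrt_le_1_alt; nra.
have HQ : N = t * (f t / (t * f' t) - 1) by rewrite /N /a; field; lra.
have H1 : w1 * (1 + vt) * (1 + S) * N <= w1 * (1 + vt) * (1 + lam) * N.
  apply: Rmult_le_compat_r => //; apply: Rmult_le_compat_l; nra.
have H2 : (w1 * ((1 + vt) * S + vt) + w2) * t <= (w1 * ((1 + vt) * lam + vt) + w2) * t.
  apply: Rmult_le_compat_r; first lra.
  have : w1 * ((1 + vt) * S) <= w1 * ((1 + vt) * lam) by apply: Rmult_le_compat_l => //; apply: Rmult_le_compat_l; lra.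
  lra.
have H3 : w1 * (1 + vt) * (1 + lam) * N + (w1 * ((1 + vt) * lam + vt) + w2) * t
   = t * (w1 * (1 + vt) * (1 + lam) * (f t / (t * f' t) - 1) + w1 * ((1 + vt) * lam + vt) + w2).
  rewrite HQ; ring.
have H4 := Rmult_lt_compat_l t _ _ Ht0 Hrc.
lra.
Qed.
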